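(* Let $\Omega\subseteq\mathbb{R}^n$ be open and convex, let $f:\Omega\to\mathbb{R}$ be convex and differentiable with $\nabla f$ Lipschitz continuous with constant $L$ (extend $f$ by $+\infty$ outside $\Omega$), let $g:\mathbb{R}^n\to\mathbb{R}\cup\{+\infty\}$ be convex with closed sublevel sets, and let $h=f+g$ have compact sublevel sets and $h^\star=\inf_x h(x)<\infty$. Run the oracle-structured minimization method (described in the context) from $x^0\in\Omega$, with parameters satisfying $\mu_{\max}\tau_{\min}>2L/(1-\alpha)$. Then for every $k_0$ there exists $k\ge k_0$ with $t_k=1$; that is, undamped steps occur infinitely often.
   Context: Oracle-structured minimization method (OSMM). Fixed parameters: memory $M\ge1$ (integer), $\alpha,\beta\in(0,1)$, $\tau_{\min}>0$, $0<\mu_{\min}\le\mu_{\max}$, $\gamma_{\rm dec}\in(0,1)$, $\gamma_{\rm inc}>1$, and an initial $\mu_0\in[\mu_{\min},\mu_{\max}]$. There is a constant $C$ and, for each $k$, a symmetric positive semidefinite matrix $H_k$ with $\|H_k\|_2\le C$ (otherwise arbitrary). For $k=0,1,2,\dots$: (1) $l_k(x)=\max_{i=\max\{0,k-M+1\},\dots,k}\big(f(x^i)+\nabla f(x^i)^T(x-x^i)\big)$; $\tau_k=\operatorname{Tr}(H_k)/n$; $\lambda_k=\mu_k(\tau_k+\tau_{\min})$. (2) $x^{k+1/2}=\operatorname*{argmin}_x\big(l_k(x)+g(x)+\tfrac12(x-x^k)^T(H_k+\lambda_kI)(x-x^k)\big)$, $v^k=x^{k+1/2}-x^k$. (3) With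 $\phi_k(t)=f(x^k+tv^k)+t\,g(x^{k+1/2})+(1-t)g(x^k)$ for $t\in[0,1]$, let $t_k=\beta^j$ where $j$ is the smallest nonnegative integer with $\phi_k(t_k)\le h(x^k)-\frac{\alpha t_k}{2}(v^k)^T(H_k+\lambda_kI)v^k$; set $x^{k+1}=x^k+t_kv^k$. (4) $\mu_{k+1}=\max\{\gamma_{\rm dec}\mu_k,\mu_{\min}\}$ if $t_k=1$, and $\mu_{k+1}=\min\{\gamma_{\rm inc}\mu_k,\mu_{\max}\}$ if $t_k<1$. *)

(* Defs.v *)
From HB Require Import structures.
From mathcomp Require Import all_boot all_order all_algebra.
From mathcomp Require Import all_classical all_reals all_analysis.
Set Implicit Arguments. Unset Strict Implicit. Unset Printing Implicit Defensive.
Import Order.TTheory GRing.Theory Num.Theory.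
Import numFieldNormedType.Exports.
Local Open Scope classical_set_scope.
Local Open Scope ring_scope.

Section OSMM.
Variables (R : realType) (n : nat).
Notation vec := 'cV[R]_n.

Definition dotv (u v : vec) : R := \sum_(i < n) u i 0 * v i 0.
Definition enorm (v : vec) : R := Num.sqrt (dotv v v).

Definition gradient (f : vec -> R) (x : vec) : vec :=
  \col_(i < n) ('d f x (delta_mx i 0 : vec)).

Definition convex_fun_on (A : set vec) (f : vec -> R) : Prop :=
  forall x y (t : R), A x -> A y -> 0 <= t <= 1 ->
    f (t *: x + (1 - t) *: y) <= t * f x + (1 - t) * f y.

Definition convex_efun (g : vec -> \bar R) : Prop :=
  forall (x y : vec) (t : R), 0 < t < 1 ->
    (g (t *: x + (1 - t) *: y)%R <= t%:E * g x + (1 - t)%:E * g y)%E.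

Definition fext (Omega : set vec) (f : vec -> R) (x : vec) : \bar R :=
  if `[< Omega x >] then (f x)%:E else +oo%E.

Definition hfun (Omega : set vec) (f : vec -> R) (g : vec -> \bar R) (x : vec)
  : \bar R := (fext Omega f x + g x)%E.

(* Cutting-plane model l_k(y) = max_{i = max(0,k-M+1)..k} f(x^i) + grad f(x^i)^T (y - x^i). *)
Definition lin_at (f : vec -> R) (X : nat -> vec) (i : nat) (y : vec) : R :=
  f (X i) + dotv (gradient f (X i)) (y - X i).
Definition lmodel (M : nat) (f : vec -> R) (X : nat -> vec) (k : nat) (y : vec) : R :=
  \big[Num.max/lin_at f X k y]_(k.+1 - M <= i < k.+1) lin_at f X i y.

Definition quadf (A : 'M[R]_n) (v : vec) : R := dotv v (A *m v).

End OSMM.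

(* Main.v *)
Require Import Defs.
From HB Require Import structures.
From mathcomp Require Import all_boot all_order all_algebra.
From mathcomp Require Import all_classical all_reals all_analysis.
From mathcomp Require Import lra ring.
Import Order.TTheory GRing.Theory Num.Theory.
Import numFieldNormedType.Exports.
Local Open Scope classical_set_scope.
Local Open Scope ring_scope.

Section S.
Variables (R : realType) (n : nat).
Notation vec := 'cV[R]_n.
Implicit Types u v w : vec.

Lemma dotvC u v : dotv u v = dotv v u.
Proof. by apply: eq_bigr => i _; rewrite mulrC. Qed.
Lemma dotvDl u v w : dotv (u + v) w = dotv u w + dotv v w.
Proof. by rewrite /dotv -big_split; apply: eq_bigr => i _; rewrite mxE mulrDl. Qed.
Lemma dotvZl (s : R) u v : dotv (s *: u) v = s * dotv u v.
Proof. by rewrite /dotv mulr_sumr; apply: eq_bigr => i _; rewrite mxE mulrA. Qed.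
Lemma dotvNl u v : dotv (- u) v = - dotv u v.
Proof. by rewrite -scaleN1r dotvZl mulN1r. Qed.
Lemma dotvBl u v w : dotv (u - v) w = dotv u w - dotv v w.
Proof. by rewrite dotvDl dotvNl. Qed.
Lemma dotvDr u v w : dotv w (u + v) = dotv w u + dotv w v.
Proof. by rewrite dotvC dotvDl !(dotvC w). Qed.
Lemma dotvZr (s : R) u v : dotv v (s *: u) = s * dotv v u.
Proof. by rewrite dotvC dotvZl dotvC. Qed.
Lemma dotvBr u v w : dotv w (u - v) = dotv w u - dotv w v.
Proof. by rewrite dotvC dotvBl !(dotvC w). Qed.
Lemma dotv_ge0 v : 0 <= dotv v v.
Proof. by apply: sumr_ge0 => i _; rewrite -expr2 sqr_ge0. Qed.
Lemma enorm_ge0 v : 0 <= enorm v.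
Proof. exact: sqrtr_ge0. Qed.
Lemma enorm_sq v : enorm v ^+ 2 = dotv v v.
Proof. by rewrite sqr_sqrtr // dotv_ge0. Qed.
Lemma dotv_eq0 v : dotv v v = 0 -> forall u, dotv v u = 0.
Proof.
move=> /eqP; rewrite psumr_eq0; last by move=> i _; rewrite -expr2 sqr_ge0.
move=> /allP H0 u; apply: big1 => i _.
have := H0 i (mem_index_enum i); rewrite -expr2 sqrf_eq0 => /eqP ->.
by rewrite mul0r.
Qed.
Lemma enormZ (s : R) v : enorm (s *: v) = `|s| * enorm v.
Proof.
by rewrite /enorm dotvZl dotvZr mulrA -expr2 sqrtrM ?sqr_ge0 // sqrtr_sqr.
Qed.
Lemma CS u v : dotv u v <= enorm u * enorm v.
Proof.
have uu := enorm_sq u; have vv := enorm_sq v.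
set a := enorm u in uu *; set b := enorm v in vv *.
have a0 : 0 <= a by exact: enorm_ge0.
have b0 : 0 <= b by exact: enorm_ge0.
have [az|az] := eqVneq a 0.
  by rewrite dotv_eq0 ?az ?mul0r // -uu az expr2 mul0r.
have [bz|bz] := eqVneq b 0.
  by rewrite dotvC dotv_eq0 ?bz ?mulr0 // -vv bz expr2 mul0r.
have ap : 0 < a by rewrite lt_def az.
have bp : 0 < b by rewrite lt_def bz.
have := dotv_ge0 (b *: u - a *: v).
rewrite !(dotvBl, dotvBr, dotvZl, dotvZr) (dotvC v u) -uu -vv => H.
have H2 : 0 <= (a * b) * (a * b - dotv u v) by nra.
rewrite -subr_ge0; move: H2; rewrite pmulr_rge0 //; exact: mulr_gt0.
Qed.
Lemma quadfD (A : 'M[R]_n) (l : R) v :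
  quadf (A + l%:M) v = quadf A v + l * dotv v v.
Proof. by rewrite /quadf mulmxDl mul_scalar_mx dotvDr dotvZr. Qed.
Lemma dot_delta (i : 'I_n) w : dotv (delta_mx i 0) w = w i 0.
Proof.
rewrite /dotv (bigD1 i) //= big1 ?addr0 => [|j /negbTE ji]; rewrite mxE.
  by rewrite !eqxx mul1r.
by rewrite ji mul0r.
Qed.
Lemma tr_ge0 (A : 'M[R]_n) : (forall v, 0 <= quadf A v) -> 0 <= \tr A.
Proof.
move=> HA; rewrite /mxtrace; apply: sumr_ge0 => i _.
have := HA (delta_mx i 0); rewrite /quadf dot_delta -colE mxE //.
Qed.
Lemma dot_grad (f : vec -> R) a (d : vec) :
  differentiable f a -> dotv (gradient f a) d = 'd f a d.
Proof.
move=> df.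
rewrite {2}(matrix_sum_delta d) linear_sum /dotv; apply: eq_bigr => i _.
rewrite big_ord1 linearZ /= mxE mulrC; congr (_ * _).
Qed.
Lemma grad_ineq (Omega : set vec) (f : vec -> R) a b :
  convex_fun_on Omega f -> differentiable f a -> Omega a -> Omega b ->
  f a + dotv (gradient f a) (b - a) <= f b.
Proof.
move=> cf df Oa Ob.
rewrite dot_grad // -deriveE //.
rewrite -lerBrDl.
have dv := @diff_derivable _ _ _ f a (b - a) df.
rewrite /derive.
move: dv; rewrite /derivable; set q := (fun h : R => _) => dv.
have cq : q @ 0^'+ --> lim (q @ 0^').
  apply: cvg_trans dv; apply: cvg_fmap2; apply: within_subset => x /= /gt_eqF ->; done.
apply: (cvgr_to_le cq).
near=> h.
have h0 : 0 < h by near: h; exact: nbhs_right_gt.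
have h1 : h <= 1 by near: h; exact: nbhs_right_le.
rewrite /q /= ler_pdivrMl //.
have := cf b a h Ob Oa; rewrite h1 ltW //= => /(_ isT).
have -> : h *: b + (1 - h) *: a = h *: (b - a) + a.
  by rewrite scalerBr scalerBl scale1r addrCA addrC.
move=> le; rewrite mulrBr; lra.
Unshelve. all: by end_near.
Qed.

Lemma seg_in (Omega : set vec) (f : vec -> R) (g : vec -> \bar R) L x z gx gz :
  open Omega -> convex_fun_on Omega f -> (forall y, Omega y -> differentiable f y) ->
  0 <= L ->
  (forall x y, Omega x -> Omega y ->
     enorm (gradient f x - gradient f y) <= L * enorm (x - y)) ->
  convex_efun g -> (forall y, g y != -oo%E) ->
  (forall c : R, compact [set y | (hfun Omega f g y <= c%:E)%E]) ->
  Omega x -> g x = gx%:E -> g z = gz%:E -> Omega z.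
Proof.
move=> oO cf df L0 Lip cg gNy cpt Ox gxE gzE.
set v := z - x.
pose w (s : R) := x + s *: v.
set a := dotv (gradient f x) v.
pose B := f x + `|a| + L * dotv v v + Num.max gx gz.
have Hb : forall s, 0 <= s <= 1 -> Omega (w s) -> (hfun Omega f g (w s) <= B%:E)%E.
  move=> s /andP[s0 s1] Ows.
  rewrite /hfun /fext asboolT // /B EFinD.
  apply: leeD; last first.
    have [->|s0'] := eqVneq s 0.
      by rewrite /w scale0r addr0 gxE lee_fin le_max lexx.
    have [->|s1'] := eqVneq s 1.
      by rewrite /w scale1r /v addrC subrK gzE lee_fin le_max lexx orbT.
    have st : 0 < s < 1 by rewrite !lt_def s0 s1 s0' eq_sym s1'.
    have := cg z x s st.
    have -> : s *: z + (1 - s) *: x = w s.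
      by rewrite /w /v scalerBr scalerBl scale1r addrCA addrC.
    rewrite gzE gxE -!EFinM -EFinD => /le_trans; apply.
    rewrite lee_fin.
    have mx1 : gx <= Num.max gx gz by rewrite le_max lexx.
    have mx2 : gz <= Num.max gx gz by rewrite le_max lexx orbT.
    nra.
  rewrite lee_fin.
  have gi := @grad_ineq Omega f (w s) x cf (df _ Ows) Ows Ox.
  have e1 : x - w s = - (s *: v) by rewrite /w opprD addrA subrr add0r.
  rewrite e1 -scaleNr dotvZr in gi.
  have e2 : dotv (gradient f (w s)) v =
      dotv (gradient f (w s) - gradient f x) v + a by rewrite dotvBl subrK.
  have cs := CS (gradient f (w s) - gradient f x) v.
  have lp := Lip _ _ Ows Ox.
  have e3 : w s - x = s *: v by rewrite /w addrC addKr.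
  rewrite e3 enormZ ger0_norm // in lp.
  have nv := enorm_ge0 v.
  have ng := enorm_ge0 (gradient f (w s) - gradient f x).
  have vv := enorm_sq v.
  have aa : a <= `|a| by exact: ler_norm.
  have aa2 : - `|a| <= a by rewrite lerNl -normrN; exact: ler_norm.
  move: gi cs lp vv; rewrite e2.
  set G := enorm _; set N := enorm v; set C := dotv _ v.
  move=> gi cs lp vv.
  have h1 : s * C <= s * (G * N) by rewrite ler_wpM2l.
  have h2 : G * N <= L * (s * N) * N by rewrite ler_wpM2r.
  have h3 : s * a <= `|a|.
    apply: (le_trans (ler_wpM2l s0 aa)); rewrite -[X in _ <= X]mul1r ler_wpM2r //.
  have h4 : s * (L * (s * N) * N) <= L * dotv v v.
    rewrite -vv; have : s * s <= 1 by nra.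
    have : 0 <= L * N ^+ 2 by rewrite mulr_ge0 // sqr_ge0.
    nra.
  nra.
have clA : closed [set y | (hfun Omega f g y <= B%:E)%E].
  exact: compact_closed (@norm_hausdorff _ _) (cpt B).
pose T := [set s : R | 0 <= s <= 1 /\ Omega (w s)].
have w0 : w 0 = x by rewrite /w scale0r addr0.
have T0 : T 0 by split; [rewrite lexx ler01 | rewrite w0].
have hsT : has_sup T.
  split; first by exists 0.
  by exists 1 => s [/andP[_ ?] _].
set S := sup T.
have S0 : 0 <= S by exact: sup_upper_bound.
have S1 : S <= 1 by apply: ge_sup; [exists 0 | move=> s [/andP[_ ?] _]].
have nvp : 0 < `|v| + 1 by rewrite ltr_wpDl.
have AwS : (hfun Omega f g (w S) <= B%:E)%E.
  apply: clA => U /nbhs_ballP[e /= e0 eU].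
  have d0 : 0 < e / (`|v| + 1) by rewrite divr_gt0.
  have [s [/andP[s0 s1] Ows] sS] := sup_adherent d0 hsT.
  have sS' : s <= S by apply: (sup_upper_bound hsT); split => //; rewrite s0 s1.
  exists (w s); split; first by apply: Hb => //; rewrite s0 s1.
  apply: eU; rewrite -ball_normE /=.
  have -> : w S - w s = (S - s) *: v by rewrite /w scalerBl opprD addrACA subrr add0r.
  rewrite normrZ ger0_norm ?subr_ge0 //.
  apply: (@le_lt_trans _ _ (e / (`|v| + 1) * `|v|)).
    by rewrite ler_wpM2r // lerBlDr addrC -lerBlDr ltW.
  by rewrite mulrAC ltr_pdivrMr // ltr_pM2l // ltrDl.
have OwS : Omega (w S).
  apply: contrapT => NO; move: AwS.
  by rewrite /hfun /fext asboolF // addye.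
have S1' : S = 1.
  apply/eqP; rewrite eq_le S1 /=; apply/negPn/negP; rewrite -ltNge => lt1.
  have /nbhs_ballP[e /= e0 eO] := oO _ OwS.
  pose d := Num.min (1 - S) (e / (`|v| + 1) / 2).
  have dp : 0 < d by rewrite lt_min subr_gt0 lt1 /= !divr_gt0.
  have d1 : d <= 1 - S by rewrite ge_min lexx.
  have d2 : d <= e / (`|v| + 1) / 2 by rewrite ge_min lexx orbT.
  have TSd : T (S + d).
    split; first by apply/andP; split; [rewrite addr_ge0 // ltW | rewrite -lerBrDl].
    apply: eO; rewrite -ball_normE /=.
    have -> : w S - w (S + d) = - (d *: v).
      by rewrite /w scalerDl opprD opprD addrACA subrr add0r addrA subrr add0r.
    rewrite normrN normrZ ger0_norm ?ltW //.
    apply: (@le_lt_trans _ _ (e / (`|v| + 1) / 2 * `|v|)).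
      by rewrite ler_wpM2r.
    have key : e / (`|v| + 1) * `|v| < e.
      by rewrite mulrAC ltr_pdivrMr // ltr_pM2l // ltrDl.
    have : 0 <= e / (`|v| + 1) * `|v| by rewrite mulr_ge0 // ltW // divr_gt0.
    move: key; set c := e / _ * _; rewrite -mulrA [_^-1 * _]mulrC mulrA -/c.
    lra.
  have := sup_upper_bound hsT TSd; rewrite -/S; lra.
by move: OwS; rewrite S1' /w scale1r /v addrC subrK.
Qed.
Lemma dotv0l v : dotv 0 v = 0.
Proof. by rewrite /dotv big1 // => i _; rewrite mxE mul0r. Qed.
Lemma quadf0 (A : 'M[R]_n) : quadf A 0 = 0.
Proof. by rewrite /quadf dotv0l. Qed.

Lemma lmodel_le (Omega : set vec) f X M k y :
  convex_fun_on Omega f -> (forall y, Omega y -> differentiable f y) ->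
  Omega y -> Omega (X k) ->
  (forall i, (k.+1 - M <= i < k.+1)%N -> Omega (X i)) ->
  lmodel M f X k y <= f y.
Proof.
move=> cf df Oy OXk Hw; rewrite /lmodel big_seq.
elim/big_ind: _ => [|u w' hu hw|i].
- by apply: (@grad_ineq Omega f) => //; apply: df.
- by rewrite ge_max hu hw.
- rewrite mem_index_iota => /Hw Oi.
  by apply: (@grad_ineq Omega f) => //; apply: df.
Qed.

Lemma lmodel_ge (f : vec -> R) (X : nat -> vec) M k (y : vec) : (1 <= M)%N -> lin_at f X k y <= lmodel M f X k y.
Proof.
move=> M1; rewrite /lmodel.
apply: (@le_bigmax_seq _ _ _ _ _ k xpredT (fun i => lin_at f X i y)) => //.
by rewrite mem_index_iota ltnSn andbT leq_subLR addnC -addn1 leq_add2l.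
Qed.

Lemma bernoulli (c : R) (N : nat) : 0 <= c -> 1 + N%:R * c <= (1 + c) ^+ N.
Proof.
move=> c0; elim: N => [|N IH]; first by rewrite mul0r addr0 expr0.
rewrite exprS -addn1 natrD.
have : 0 <= N%:R * c by rewrite mulr_ge0.
nra.
Qed.
End S.

Theorem mainTheorem4
  (R : realType) (n : nat)
  (Omega : set 'cV[R]_n) (f : 'cV[R]_n -> R) (g : 'cV[R]_n -> \bar R) (L : R)
  (M : nat) (alpha beta tau_min mu_min mu_max gamma_dec gamma_inc mu0 C : R)
  (H : nat -> 'M[R]_n) (X Xh : nat -> 'cV[R]_n) (mu t : nat -> R) :
  (* Omega open and convex; f convex, differentiable, L-Lipschitz gradient *)
  open Omega -> convex_set Omega ->
  convex_fun_on Omega f ->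
  (forall x, Omega x -> differentiable f x) ->
  0 <= L ->
  (forall x y, Omega x -> Omega y ->
     enorm (gradient f x - gradient f y) <= L * enorm (x - y)) ->
  (* g convex with closed sublevel sets *)
  convex_efun g ->
  (forall c : R, closed [set x | (g x <= c%:E)%E]) ->
  (* h = f + g has compact sublevel sets and finite infimum *)
  (forall c : R, compact [set x | (hfun Omega f g x <= c%:E)%E]) ->
  (ereal_inf [set hfun Omega f g x | x in setT] < +oo)%E ->
  (* parameters *)
  (1 <= M)%N -> 0 < alpha < 1 -> 0 < beta < 1 -> 0 < tau_min ->
  0 < mu_min -> mu_min <= mu_max -> 0 < gamma_dec < 1 -> 1 < gamma_inc ->
  mu_min <= mu0 <= mu_max ->
  mu_max * tau_min > 2 * L / (1 - alpha) ->
  (* the matrices H_k: symmetric PSD with spectral norm <= C *)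
  (forall k, (H k)^T = H k) ->
  (forall k v, 0 <= quadf (H k) v) ->
  (forall k v, enorm (H k *m v) <= C * enorm v) ->
  (* the OSMM iteration *)
  Omega (X 0%N) ->
  mu 0%N = mu0 ->
  (forall k,
     let lam := mu k * (\tr (H k) / n%:R + tau_min) in
     let P := H k + lam%:M in
     let model y := ((lmodel M f X k y + quadf P (y - X k) / 2)%:E + g y)%E in
     let v := Xh k - X k in
     let phi s := (fext Omega f (X k + s *: v) + s%:E * g (Xh k)
                   + (1 - s)%:E * g (X k))%E in
     let armijo s := (phi s <= hfun Omega f g (X k)
                        - (alpha * s / 2 * quadf P v)%:E)%E in
     [/\ (forall y, (model (Xh k) <= model y)%E),
         (exists j : nat, t k = beta ^+ j /\ armijo (beta ^+ j) /\
            forall j' : nat, (j' < j)%N -> ~ armijo (beta ^+ j')),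
         X k.+1 = X k + t k *: v &
         mu k.+1 = (if t k == 1 then Num.max (gamma_dec * mu k) mu_min
                    else Num.min (gamma_inc * mu k) mu_max)]) ->
  forall k0 : nat, exists k : nat, (k0 <= k)%N /\ t k = 1.
Proof.
move=> oO cO cf df L0 Lip cg gcl cpt hinf M1 /andP[a0 a1] /andP[b0 b1] tau0
  mumin0 mumm /andP[gd0 gd1] gi1 /andP[mu0l mu0u] Hpar Hsym Hpsd Hbnd OX0 mu0E Hit k0.
pose lam k := mu k * (\tr (H k) / n%:R + tau_min).
pose arm k s := (fext Omega f (X k + s *: (Xh k - X k)) + s%:E * g (Xh k)
                   + (1 - s)%:E * g (X k) <= hfun Omega f g (X k)
                   - (alpha * s / 2 * quadf (H k + (lam k)%:M) (Xh k - X k))%:E)%E.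
have A1 : forall k, arm k 1 -> t k = 1.
  move=> k ak; case: (Hit k) => _ [j [tj [aj nj]]] _ _.
  case: j tj aj nj => [|j] tj aj nj; first by rewrite tj expr0.
  by exfalso; apply: (nj 0%N) => //; rewrite expr0.
have [[y0 gy0]|gN] := pselect (exists y, g y = -oo%E).
  have gall : forall z, g z = -oo%E.
    move=> z; apply/eqP; rewrite -leeNy_eq.
    have := cg y0 (2%:R *: z - y0) (2^-1 : R).
    have h2 : (0 : R) < (2^-1 : R) < 1.
      by apply/andP; split; [rewrite invr_gt0 | rewrite invf_lt1]; rewrite ?ltr0n ?ltr1n.
    move=> /(_ h2).
    have -> : (2^-1 : R) *: y0 + (1 - 2^-1) *: (2%:R *: z - y0) = z.
      have e : (1 - 2^-1 : R) = 2^-1 by lra.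
      by rewrite e scalerBr scalerA mulVf ?pnatr_eq0 // scale1r addrC subrK.
    rewrite gy0 gt0_muleNy ?lte_fin ?invr_gt0 ?ltr0n // addNye //.
  exists k0; split => //; apply: A1.
  by rewrite /arm !gall mul1e subrr mul0e adde0 addeNy leNye.
have gNy : forall y, g y != -oo%E by move=> y; apply/eqP => gy; apply: gN; exists y.
apply: contrapT => Hno.
have Hne : forall k, (k0 <= k)%N -> t k != 1.
  by move=> k kk; apply/eqP => tk; apply: Hno; exists k.
have Hnarm : forall k, (k0 <= k)%N -> ~ arm k 1.
  by move=> k kk ak; move/eqP: (Hne k kk); apply; apply: A1.
have Hfin : forall k, (k0 <= k)%N -> Omega (X k) /\ exists gx, g (X k) = gx%:E.
  move=> k kk.
  have [OX|NOX] := pselect (Omega (X k)); last first.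
    exfalso; apply: (Hnarm k kk).
    by rewrite /arm /hfun /fext (asboolF NOX) addye // -EFinN addye // leey.
  split => //.
  case E : (g (X k)) => [r| |]; first by exists r.
    exfalso; apply: (Hnarm k kk).
    by rewrite /arm /hfun E {2}/fext (asboolT OX) addey // -EFinN addye // leey.
  by move: (gNy (X k)); rewrite E.
have mub : forall k, mu_min <= mu k <= mu_max.
  elim => [|k IH]; first by rewrite mu0E mu0l mu0u.
  case: (Hit k) => _ _ _ ->; move/andP: IH => [l u].
  case: eqP => _.
    rewrite le_max lexx orbT /= ge_max mumm andbT.
    nra.
  rewrite ge_min lexx orbT andbT le_min mumm andbT; nra.
have grow : forall m, gamma_inc ^+ m * mu_min <= mu (k0 + m)%N \/ mu_max <= mu (k0 + m)%N.
  elim => [|m IH]; first by left; rewrite expr0 mul1r addn0; case/andP: (mub k0).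
  rewrite addnS; have := Hne (k0 + m)%N (leq_addr _ _).
  case: (Hit (k0 + m)%N) => _ _ _ -> /negbTE ->.
  have [h|h] := leP (gamma_inc * mu (k0 + m)%N) mu_max.
    left; rewrite exprS -mulrA.
    case: IH => IH; first by rewrite ler_wpM2l // ltW // (lt_trans ltr01).
    case/andP: (mub (k0 + m)%N) => l1 u1.
    have : 0 <= mu_max by lra.
    nra.
  by right.
have [N HN] : exists N : nat, mu_max <= N%:R * ((gamma_inc - 1) * mu_min).
  have p : 0 < (gamma_inc - 1) * mu_min by rewrite mulr_gt0 // subr_gt0.
  exists (Num.bound (mu_max / ((gamma_inc - 1) * mu_min))).
  rewrite -ler_pdivrMr //; apply: ltW; apply: archi_boundP.
  by rewrite divr_ge0 // ltW // (lt_le_trans mumin0).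
pose k := (k0 + (N + M))%N.
have muk : mu_max <= mu k.
  case: (grow (N + M)%N) => // h; apply: le_trans h.
  have gi0 : 0 <= gamma_inc - 1 by lra.
  have := @bernoulli R (gamma_inc - 1) (N + M)%N gi0; rewrite addrCA subrr addr0 natrD => hb.
  have : 0 <= M%:R * ((gamma_inc - 1) * mu_min) by rewrite !mulr_ge0 // ltW.
  have : 0 <= mu_min by exact: ltW.
  nra.
have kk : (k0 <= k)%N by rewrite leq_addr.
have [OX [gx gxE]] := Hfin k kk.
have Hw : forall i, (k.+1 - M <= i < k.+1)%N -> Omega (X i).
  move=> i /andP[hi _]; apply: (proj1 (Hfin i _)).
  apply: (leq_trans _ hi); rewrite /k.
  have -> : (k0 + (N + M)).+1 = (k0 + N.+1 + M)%N by rewrite addnS !addnA.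
  by rewrite addnK leq_addr.
apply: (Hnarm k kk).
case: (Hit k) => Hmod _ _ _.
have := Hmod (X k); rewrite subrr quadf0 mul0r addr0 gxE.
set z := Xh k; set x := X k; set v := z - x.
set lmz := lmodel M f X k z; set lmx := lmodel M f X k x.
set q := quadf _ v.
have lmxf : lmx <= f x by apply: (@lmodel_le _ _ Omega) => //.
have lmzg := @lmodel_ge R n f X M k z M1; rewrite -/lmz in lmzg.
case E : (g z) => [gz| |]; last by move: (gNy z); rewrite E.
  2: by rewrite addey.
rewrite -!EFinD lee_fin => Hm.
have Oz : Omega z.
  by apply: (@seg_in _ _ Omega f g L x z gx gz) => //.
have xv : x + v = z by rewrite /v addrC subrK.
rewrite /arm -/x -/z -/v scale1r xv /hfun /fext (asboolT OX) (asboolT Oz).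
rewrite E gxE mul1e subrr mul0e adde0 -EFinN -!EFinD lee_fin.
change (quadf (H k + (lam k)%:M) v) with q.
have gi := @grad_ineq R n Omega f z x cf (df _ Oz) Oz OX.
have e1 : x - z = - v by rewrite /v opprB.
rewrite e1 -scaleN1r dotvZr in gi.
move: lmzg; rewrite /lin_at -/x -/v => lmzg.
set a := dotv (gradient f x) v in lmzg.
have e2 : dotv (gradient f z) v = dotv (gradient f z - gradient f x) v + a.
  by rewrite dotvBl subrK.
have cs := @CS R n (gradient f z - gradient f x) v.
have lp := Lip _ _ Oz OX; rewrite -/v in lp.
have nv := @enorm_ge0 R n v.
have ng := @enorm_ge0 R n (gradient f z - gradient f x).
have vv := @enorm_sq R n v.
have hq : lam k * dotv v v <= q.
  by rewrite /q quadfD lerDr Hpsd.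
have trp : 0 <= \tr (H k) / n%:R by rewrite divr_ge0 //; apply: tr_ge0; exact: Hpsd.
have hlam : mu_max * tau_min <= lam k.
  rewrite /lam; case/andP: (mub k) => l u.
  have : 0 <= mu k by lra.
  nra.
have hpar : 2 * L < mu_max * tau_min * (1 - alpha).
  by rewrite -ltr_pdivrMr ?subr_gt0.
move: gi cs lp vv hq; rewrite e2.
set G := enorm _; set Nv := enorm v; set Cd := dotv _ v; set dvv := dotv v v.
move=> gi cs lp vv hq.
have h2 : G * Nv <= L * Nv * Nv by rewrite ler_wpM2r.
have dv0 : 0 <= dvv by rewrite -vv sqr_ge0.
have h3 : 2 * L * dvv <= (1 - alpha) * q.
  have : (1 - alpha) * (lam k * dvv) <= (1 - alpha) * q by rewrite ler_wpM2l // subr_ge0 ltW.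
  have : 2 * L * dvv <= mu_max * tau_min * (1 - alpha) * dvv by rewrite ler_wpM2r // ltW.
  have : mu_max * tau_min * (1 - alpha) * dvv <= lam k * (1 - alpha) * dvv.
    by rewrite ler_wpM2r // ler_wpM2r // subr_ge0 ltW.
  nra.
have : Nv * Nv = dvv by rewrite -vv expr2.
nra.
Qed.
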